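(* For $n\ge1$ and $0\le i\le\lfloor n/2\rfloor$, $b(n,i,i)=\dfrac{n!}{i!(n-2i)!2^i}$.
   Context: The integers $b(n,i,j)$ ($n\ge1$) are defined by $b(1,0,0)=1$, $b(1,i,j)=0$ for $(i,j)\ne(0,0)$, $b(n,i,j)=0$ if $i<0$ or $j<0$, and $b(n+1,i,j)=b(n,i,j)+2i\,b(n,i,j-1)+(n-2i+2)\,b(n,i-1,j-1)$. (Equivalently, $b(n,i,j)$ is the number of $\pi\in\mathfrak{S}_n$ with $i$ cycle peaks — indices $m$ with $\pi^{-1}(m)<m>\pi(m)$ — and $n-j$ cycles.) *)

(* Defs.v *)
From mathcomp Require Import all_boot all_order all_algebra.
Set Implicit Arguments. Unset Strict Implicit. Unset Printing Implicit Defensive.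
Import GRing.Theory Num.Theory.
Local Open Scope ring_scope.

(* b_aux m i j = b(m+1, i, j) for natural indices i j; negative indices
   are handled by the convention b(n,i,j) = 0 when i < 0 or j < 0. *)
Fixpoint b_aux (m : nat) (i j : nat) : int :=
  match m with
  | 0%N => if (i == 0%N) && (j == 0%N) then 1 else 0
  | m'.+1 =>
      b_aux m' i j
      + (match j with 0%N => 0 | j'.+1 => (2 * i)%:Z * b_aux m' i j' end)
      + (match i, j with
         | i'.+1, j'.+1 => ((m'.+1)%:Z - (2 * i)%:Z + 2) * b_aux m' i' j'
         | _, _ => 0 end)
  end.

Definition b (n i j : nat) : int := b_aux n.-1 i j.

Example ex1 : b 4 2 2 = 3. Proof. by []. Qed.
Example ex2 : b 5 1 1 = 10. Proof. by []. Qed.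

(* Main.v *)
Require Import Defs.
From mathcomp Require Import all_boot all_order all_algebra.
From mathcomp Require Import zify ring.
Local Open Scope ring_scope.
Import GRing.Theory.

Lemma b_lt (m i j : nat) : (j < i)%N -> b_aux m i j = 0.
Proof.
elim: m i j => [|m IH] i j hji /=.
  by case: i hji => //= i _; rewrite andFb.
rewrite IH // ; case: j hji => [|j] hji; case: i hji => [|i] hji //=;
  rewrite ?IH ?mulr0 ?addr0 //; lia.
Qed.

Lemma b_big (m i j : nat) : (m.+1 < 2 * i)%N -> b_aux m i j = 0.
Proof.
elim: m i j => [|m IH] i j hji /=.
  by case: i hji => //= i _; rewrite andFb.
rewrite (IH i j); last lia.
case: j => [|j]; case: i hji => [|i] hji //=.
rewrite (IH i.+1 j); last lia.
rewrite mulr0 !add0r.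
case: (ltnP m.+1 (2 * i)) => h; first by rewrite IH // mulr0.
have -> : (m.+1)%:Z - (2 * i.+1)%:Z + 2 = 0 by lia.
by rewrite mul0r.
Qed.

Lemma b_00 (m : nat) : b_aux m 0 0 = 1.
Proof. by elim: m => //= m ->; rewrite !addr0. Qed.

Lemma b_diag (m i : nat) : (2 * i <= m.+1)%N ->
  b_aux m i i * (i`! * (m.+1 - 2 * i)`! * 2 ^ i)%N%:Z = (m.+1)`!%:Z.
Proof.
elim: m i => [|m IH] [|k] h.
- by [].
- lia.
- by rewrite b_00 mul1r fact0 !muln1 mul1n subn0.
rewrite [b_aux _ _ _]/= (@b_lt _ _ _ (ltnSn k)) mulr0 addr0.
have [l hl] : exists l, m = (l + 2 * k)%N.
  exists (m - 2 * k)%N; lia.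
subst m.
have -> : ((l + 2 * k).+1)%:Z - (2 * k.+1)%:Z + 2 = (l.+1)%:Z by lia.
have H0 := IH k ltac:(lia).
have -> : ((l + 2 * k).+2 - 2 * k.+1 = l)%N by lia.
have E : ((l + 2 * k).+1 - 2 * k = l.+1)%N by lia.
rewrite E in H0.
rewrite [((l + 2 * k).+2)`!]factS [(k.+1)`!]factS expnS.
destruct l as [|l].
- rewrite (@b_big _ _ k.+1); last lia.
  rewrite add0r fact0.
  have -> : (0 + 2 * k).+2 = (2 * k.+1)%N by lia.
  move: H0; rewrite [1`!]/=.
  generalize (b_aux (0 + 2 * k) k k) (((0 + 2 * k).+1)`!) (k`!) (2 ^ k)%N => D0 F kf p H0.
  rewrite !PoszM in H0 *.
  rewrite -H0. ring.
have H1 := IH k.+1 ltac:(lia).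
have E1 : ((l.+1 + 2 * k).+1 - 2 * k.+1 = l)%N by lia.
rewrite E1 [(k.+1)`!]factS expnS in H1.
have f2 : (l.+2)`! = (l.+2 * (l.+1 * l`!))%N by rewrite !factS.
have f1 : (l.+1)`! = (l.+1 * l`!)%N by rewrite !factS.
rewrite f2 in H0. rewrite f1.
have -> : (l.+1 + 2 * k).+2 = (l.+1 + (2 * k.+1))%N by lia.
move: H0 H1.
generalize (b_aux (l.+1 + 2 * k) k k) (b_aux (l.+1 + 2 * k) k.+1 k.+1)
  (((l.+1 + 2 * k).+1)`!) (k`!) (l`!) (2 ^ k)%N => D0 D1 F kf lf p H0 H1.
rewrite !PoszM !PoszD in H0 H1 *.
rewrite !PoszM in H0 H1 *.
have -> : (D1 + (l.+2)%:Z * D0) * ((k.+1)%:Z * kf%:Z * ((l.+1)%:Z * lf%:Z) * (2%:Z * p%:Z))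
  = (l.+1)%:Z * (D1 * ((k.+1)%:Z * kf%:Z * lf%:Z * (2%:Z * p%:Z)))
    + (2%:Z * (k.+1)%:Z) * (D0 * (kf%:Z * ((l.+2)%:Z * ((l.+1)%:Z * lf%:Z)) * p%:Z)) by ring.
rewrite H0 H1. ring.
Qed.

Theorem corollary6 (n i : nat) :
  (1 <= n)%N -> (i <= n./2)%N ->
  b n i i = ((n`! %/ (i`! * (n - 2 * i)`! * 2 ^ i))%N)%:Z.
Proof.
case: n => [|m] // _ hi.
rewrite /b /=.
have H := @b_diag m i ltac:(lia).
move: H.
have hX : (0 < i`! * (m.+1 - 2 * i)`! * 2 ^ i)%N.
  by rewrite !muln_gt0 !fact_gt0 expn_gt0.
move: hX.
generalize (i`! * (m.+1 - 2 * i)`! * 2 ^ i)%N => X hX.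
case: (b_aux m i i) => t H.
  rewrite -PoszM in H. case: H => <-. by rewrite mulnK.
exfalso. move: H. rewrite NegzE. lia.
Qed.
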